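(* Let $T$ be a reasonable test. Then for every $\vec f=(f,g)\in F\times F$, every $\epsilon\in(\frac12,1)$ and every measurable $A\subseteq\Omega^\infty$: if $f(A\cap R^{\vec f}_{T,\epsilon})>0$ then $g(A\cap R^{\vec f}_{T,\epsilon})>0$. Similarly, for every $\epsilon\in(0,\frac12)$: if $g(A\cap L^{\vec f}_{T,\epsilon})>0$ then $f(A\cap L^{\vec f}_{T,\epsilon})>0$.
   Context: Let $\Omega=\{0,1\}$, $\Omega^\infty$ the set of infinite sequences $\omega=(\omega_1,\omega_2,\dots)$, and $\omega^t=(\omega_1,\dots,\omega_t)$ (also used for the cylinder set of all sequences with this prefix; $\omega^0=\emptyset$). $\mathcal G_t$ is the $\sigma$-algebra generated by the length-$t$ cylinders and $\mathcal G_\infty$ the $\sigma$-algebra generated by all cylinders. $\Delta(\Omega)$ is the set of probability distributions on $\Omega$; for $p\in\Delta(\Omega)$ and $x\in\Omega$, $p[x]$ is the probability of $x$. A forecasting strategy is a map $f:\bigcup_{t\ge0}(\Omega\times\Delta(\Omega)\times\Delta(\Omega))^t\to\Delta(\Omega)$; $F$ is the set of all forecasting strategies. Given an ordered pair $\vec f=(f,g)\in F\times F$ and $\omega\in\Omega^\infty$, the play path $(\omega,\vec f)$ is defined recursively: $(\omega,\vec f)^0=\emptyset$ and its $t$-th entry is $(\omega_t,f((\omega,\vec f)^{t-1}),g((\omega,\vec f)^{t-1}))$. The pair $\vec f$ induces two probability measures on $(\Omega^\infty,\mathcal G_\infty)$, again denoted $f$ and $g$, determined by $f(\omega^t)=\prod_{n=1}^t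 f((\omega,\vec f)^{n-1})[\omega_n]$ and $g(\omega^t)=\prod_{n=1}^t g((\omega,\vec f)^{n-1})[\omega_n]$. A (cardinal comparison) test is a sequence $T=(T_t)_{t>0}$ of $\mathcal G_t$-measurable functions $T_t:(\Omega\times\Delta(\Omega)\times\Delta(\Omega))^\infty\to[0,1]$; write $T_t(\omega,\vec f)=T_t((\omega,\vec f))$ and $T(\omega,\vec f)=\lim_t T_t(\omega,\vec f)$ whenever the limit exists. For $\epsilon\in(0,1)$ let $L^{\vec f}_{T,\epsilon}=\{\omega:T(\omega,\vec f)\text{ exists and }>\epsilon\}$ and $R^{\vec f}_{T,\epsilon}=\{\omega:T(\omega,\vec f)\text{ exists and }<\epsilon\}$. $T$ is reasonable if for all $\vec f=(f,g)$ and measurable $A$: for $\epsilon\in(0,\frac12)$, if $g(A)>0$ and $f(A)<\frac{\epsilon}{1-\epsilon}g(A)$ then $g(A\cap R^{\vec f}_{T,\epsilon})>0$; and for $\epsilon\in(\frac12,1)$, if $f(A)>0$ and $g(A)<\frac{1-\epsilon}{\epsilon}f(A)$ then $f(A\cap L^{\vec f}_{T,\epsilon})>0$. *)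

(* Defs.v *)
From Stdlib Require Import Reals Lra List Classical ClassicalEpsilon.
Import ListNotations.
Open Scope R_scope.

(* Omega = {0,1} is bool (true = 1).  Omega^infinity = nat -> bool,
   with omega_{n+1} = w n. *)
Definition seqOmega := nat -> bool.

(* Delta(Omega): a distribution on {0,1}, given by the probability of 1. *)
Record dist := Dist { pr1 : R; pr1_range : 0 <= pr1 <= 1 }.
Definition prob (p : dist) (x : bool) : R := if x then pr1 p else 1 - pr1 p.

Definition entry := (bool * dist * dist)%type.
Definition history := list entry.

Definition strategy := history -> dist.

Definition play_step (f g : strategy) (h : history) (x : bool) : history :=
  h ++ [(x, f h, g h)].

Definition play_word (f g : strategy) (u : list bool) : history :=
  fold_left (play_step f g) u [].

Definition prefix (w : seqOmega) (t : nat) : list bool := map w (seq 0 t).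

Definition play_path (f g : strategy) (w : seqOmega) (t : nat) : history :=
  play_word f g (prefix w t).

(* Probability of the cylinder u under the measure induced by the
   forecaster chosen by [sel] (sel = fst-forecaster f or snd-forecaster g):
   prod_n sel((omega,f)^{n-1})[u_n]. *)
Definition cyl_mass (f g : strategy) (sel : strategy) (u : list bool) : R :=
  snd (fold_left
         (fun (hm : history * R) (x : bool) =>
            (play_step f g (fst hm) x, snd hm * prob (sel (fst hm)) x))
         u ([], 1)).

Definition in_cyl (u : list bool) (w : seqOmega) : Prop :=
  forall i, (i < length u)%nat -> w i = nth i u false.

Inductive measurable : (seqOmega -> Prop) -> Prop :=
| meas_cyl : forall u, measurable (in_cyl u)
| meas_compl : forall A, measurable A -> measurable (fun w => ~ A w)
| meas_union : forall As : nat -> seqOmega -> Prop,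
    (forall n, measurable (As n)) -> measurable (fun w => exists n, As n w)
| meas_ext : forall A B, measurable A -> (forall w, A w <-> B w) -> measurable B.

Definition is_glb (S : R -> Prop) (r : R) : Prop :=
  (forall s, S s -> r <= s) /\ (forall r', (forall s, S s -> r' <= s) -> r' <= r).
Definition inf (S : R -> Prop) : R := epsilon (inhabits 0) (is_glb S).

Definition cover_sums (f g sel : strategy) (A : seqOmega -> Prop) (s : R) : Prop :=
  exists c : nat -> list bool,
    (forall w, A w -> exists n, in_cyl (c n) w) /\
    infinite_sum (fun n => cyl_mass f g sel (c n)) s.

(* The (Caratheodory) extension of the cylinder premeasure; on G_infinity
   it is the unique probability measure with the given cylinder values. *)
Definition measure (f g sel : strategy) (A : seqOmega -> Prop) : R :=
  inf (cover_sums f g sel A).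

Definition muF (f g : strategy) (A : seqOmega -> Prop) : R := measure f g f A.
Definition muG (f g : strategy) (A : seqOmega -> Prop) : R := measure f g g A.

(* A test: T t is applied to the length-t prefix of the play path
   (G_t-measurability = dependence on the first t entries only),
   with values in [0,1]. *)
Definition test := nat -> history -> R.
Definition is_test (T : test) : Prop :=
  forall t h, (0 < t)%nat -> 0 <= T t h <= 1.

(* T_t(omega, f), t > 0, indexed from n = t - 1. *)
Definition T_seq (T : test) (f g : strategy) (w : seqOmega) (n : nat) : R :=
  T (S n) (play_path f g w (S n)).

Definition Lset_T (T : test) (f g : strategy) (eps : R) (w : seqOmega) : Prop :=
  exists l, Un_cv (T_seq T f g w) l /\ l > eps.
Definition Rset_T (T : test) (f g : strategy) (eps : R) (w : seqOmega) : Prop :=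
  exists l, Un_cv (T_seq T f g w) l /\ l < eps.

Definition inter (A B : seqOmega -> Prop) (w : seqOmega) : Prop := A w /\ B w.

Definition reasonable (T : test) : Prop :=
  forall (f g : strategy) (A : seqOmega -> Prop), measurable A ->
    (forall eps, 0 < eps < 1/2 ->
       muG f g A > 0 -> muF f g A < eps / (1 - eps) * muG f g A ->
       muG f g (inter A (Rset_T T f g eps)) > 0) /\
    (forall eps, 1/2 < eps < 1 ->
       muF f g A > 0 -> muG f g A < (1 - eps) / eps * muF f g A ->
       muF f g (inter A (Lset_T T f g eps)) > 0).

(* Main.v *)
Require Import Defs.
From Stdlib Require Import Reals Lra List Classical ClassicalEpsilon Arith Lia.
Import ListNotations.
Open Scope R_scope.

Fixpoint dec (t n : nat) : list bool :=
  match t with O => [] | S t' => Nat.testbit n 0 :: dec t' (n / 2) end.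
Fixpoint enc (u : list bool) : nat :=
  match u with [] => O | b :: u' => (Nat.b2n b + 2 * enc u')%nat end.
Lemma dec_enc u : dec (length u) (enc u) = u.
Proof. induction u as [|b u IH]; cbn [length dec enc]; auto.
  rewrite Nat.add_b2n_double_bit0, Nat.add_b2n_double_div2, IH; auto. Qed.
Lemma dec_len t n : length (dec t n) = t.
Proof. revert n; induction t; intros; simpl; auto. Qed.

Lemma meas_all : measurable (fun _ => True).
Proof. apply meas_ext with (in_cyl []); [constructor|]. intros w; split; auto.
  intros _ i Hi; simpl in Hi; lia. Qed.
Lemma meas_none : measurable (fun _ => False).
Proof. apply meas_ext with (fun w => ~ True); [constructor; apply meas_all|]. tauto. Qed.
Lemma meas_cyl_const u (Q : Prop) : measurable (fun w => in_cyl u w /\ Q).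
Proof. destruct (classic Q).
  - apply meas_ext with (in_cyl u); [constructor|]. tauto.
  - apply meas_ext with (fun _ => False); [apply meas_none|]. tauto. Qed.

Definition dep (t : nat) (D : seqOmega -> Prop) :=
  forall w w', (forall i, (i < t)%nat -> w i = w' i) -> D w -> D w'.

Lemma in_cyl_prefix w t : in_cyl (prefix w t) w.
Proof. intros i Hi. unfold prefix in *. rewrite length_map, length_seq in Hi.
  rewrite (nth_indep _ false (w 0%nat)) by (rewrite length_map, length_seq; auto).
  rewrite map_nth, seq_nth; auto. Qed.
Lemma length_prefix w t : length (prefix w t) = t.
Proof. unfold prefix; rewrite length_map, length_seq; auto. Qed.

Lemma meas_dep t D : dep t D -> measurable D.
Proof. intros HD.
  apply meas_ext with (fun w => exists n, in_cyl (dec t n) w /\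
     (exists w0, in_cyl (dec t n) w0 /\ D w0)).
  - apply meas_union; intros n; apply meas_cyl_const.
  - intros w; split.
    + intros [n [H1 [w0 [H2 H3]]]]. apply (HD w0 w); auto.
      intros i Hi. rewrite H1, H2; auto; rewrite dec_len; auto.
    + intros Hw. exists (enc (prefix w t)).
      pose proof (dec_enc (prefix w t)) as E. rewrite length_prefix in E. rewrite E.
      split; [apply in_cyl_prefix|]. exists w; split; auto; apply in_cyl_prefix.
Qed.

Lemma meas_and A B : measurable A -> measurable B -> measurable (fun w => A w /\ B w).
Proof. intros HA HB.
  apply meas_ext with (fun w => ~ exists n, (if (n =? 0)%nat then fun w => ~ A w else fun w => ~ B w) w).
  - constructor. apply meas_union. intros [|n]; simpl; constructor; auto.
  - intros w; split.
    + intros H. split; apply NNPP; intro C; apply H; [exists 0%nat | exists 1%nat]; auto.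
    + intros [H1 H2] [[|n] Hn]; simpl in Hn; auto. Qed.
Lemma meas_ex (A : nat -> seqOmega -> Prop) : (forall n, measurable (A n)) -> measurable (fun w => exists n, A n w).
Proof. apply meas_union. Qed.
Lemma meas_all_n (A : nat -> seqOmega -> Prop) : (forall n, measurable (A n)) -> measurable (fun w => forall n, A n w).
Proof. intros H. apply meas_ext with (fun w => ~ exists n, ~ A n w).
  - constructor; apply meas_union; intros; constructor; auto.
  - intros w; split.
    + intros H1 n; apply NNPP; intro C; apply H1; eauto.
    + intros H1 [n Hn]; auto. Qed.

Lemma small_inv d : 0 < d -> exists m, / INR (S m) < d.
Proof. intros Hd. destruct (archimed_cor1 d Hd) as [N [H1 H2]].
  exists (N - 1)%nat. replace (S (N-1)) with N by lia. auto. Qed.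
Lemma inv_pos m : 0 < / INR (S m).
Proof. apply Rinv_0_lt_compat, lt_0_INR; lia. Qed.

Lemma lim_le u l N c : Un_cv u l -> (forall n, (N <= n)%nat -> u n <= c) -> l <= c.
Proof. intros Hu Hb. apply Rnot_lt_le; intro C.
  destruct (Hu (l - c)) as [N' HN']; [lra|].
  specialize (HN' (max N N') ltac:(lia)). specialize (Hb (max N N') ltac:(lia)).
  unfold R_dist in HN'. apply Rabs_def2 in HN'. lra. Qed.
Lemma lim_ge u l N c : Un_cv u l -> (forall n, (N <= n)%nat -> c <= u n) -> c <= l.
Proof. intros Hu Hb. apply Rnot_lt_le; intro C.
  destruct (Hu (c - l)) as [N' HN']; [lra|].
  specialize (HN' (max N N') ltac:(lia)). specialize (Hb (max N N') ltac:(lia)).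
  unfold R_dist in HN'. apply Rabs_def2 in HN'. lra. Qed.

Definition Cau (u : nat -> R) := forall m, exists N, forall p q, (N <= p)%nat -> (N <= q)%nat ->
  Rabs (u p - u q) < / INR (S m).

Lemma cau_iff u : (exists l, Un_cv u l) <-> Cau u.
Proof. split.
  - intros [l Hl] m. assert (Hc := CV_Cauchy u (exist _ l Hl)).
    destruct (Hc (/ INR (S m))) as [N HN]; [apply inv_pos|]. exists N; intros p q Hp Hq.
    apply HN; auto.
  - intros Hc. assert (Cauchy_crit u) as Hcc.
    { intros e He. destruct (small_inv e He) as [m Hm]. destruct (Hc m) as [N HN].
      exists N; intros p q Hp Hq. unfold R_dist. specialize (HN p q Hp Hq). lra. }
    destruct (R_complete u Hcc) as [l Hl]. eauto. Qed.

Lemma R_iff u eps : (exists l, Un_cv u l /\ l < eps) <->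
  Cau u /\ exists m N, forall n, (N <= n)%nat -> u n <= eps - / INR (S m).
Proof. split.
  - intros [l [Hl Hle]]. split; [apply cau_iff; eauto|].
    destruct (small_inv ((eps - l)/2)) as [m Hm]; [lra|]. exists m.
    destruct (Hl (/ INR (S m))) as [N HN]; [apply inv_pos|]. exists N. intros n Hn.
    specialize (HN n Hn). unfold R_dist in HN. apply Rabs_def2 in HN. lra.
  - intros [Hc [m [N HN]]]. apply cau_iff in Hc. destruct Hc as [l Hl]. exists l; split; auto.
    pose proof (lim_le _ _ _ _ Hl HN). pose proof (inv_pos m). lra. Qed.
Lemma L_iff u eps : (exists l, Un_cv u l /\ l > eps) <->
  Cau u /\ exists m N, forall n, (N <= n)%nat -> eps + / INR (S m) <= u n.
Proof. split.
  - intros [l [Hl Hle]]. split; [apply cau_iff; eauto|].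
    destruct (small_inv ((l - eps)/2)) as [m Hm]; [lra|]. exists m.
    destruct (Hl (/ INR (S m))) as [N HN]; [apply inv_pos|]. exists N. intros n Hn.
    specialize (HN n Hn). unfold R_dist in HN. apply Rabs_def2 in HN. lra.
  - intros [Hc [m [N HN]]]. apply cau_iff in Hc. destruct Hc as [l Hl]. exists l; split; auto.
    pose proof (lim_ge _ _ _ _ Hl HN). pose proof (inv_pos m). lra. Qed.

Lemma prefix_eq w w' t : (forall i, (i < t)%nat -> w i = w' i) -> prefix w t = prefix w' t.
Proof. intros H. unfold prefix. apply map_ext_in. intros a Ha. apply in_seq in Ha. apply H; lia. Qed.

Lemma Tseq_dep T f g n t (P : R -> Prop) : (S n <= t)%nat ->
  dep t (fun w => P (T_seq T f g w n)).
Proof. intros Ht w w' H. unfold T_seq, play_path. rewrite (prefix_eq w w' (S n)); auto.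
  intros i Hi; apply H; lia. Qed.

Lemma meas_Cau T f g : measurable (fun w => Cau (T_seq T f g w)).
Proof. unfold Cau. apply meas_all_n; intro m. apply meas_ex; intro N.
  apply meas_all_n; intro p. apply meas_all_n; intro q.
  apply (meas_dep (S (max p q))). intros w w' H Hw Hp Hq.
  specialize (Hw Hp Hq).
  unfold T_seq, play_path in *. rewrite <- (prefix_eq w w' (S p)), <- (prefix_eq w w' (S q)); auto;
  intros i Hi; apply H; lia. Qed.

Lemma meas_tail T f g (Q : nat -> R -> Prop) :
  measurable (fun w => exists m N, forall n, (N <= n)%nat -> Q m (T_seq T f g w n)).
Proof. apply meas_ex; intro m. apply meas_ex; intro N. apply meas_all_n; intro n.
  apply (meas_dep (S n)). intros w w' H Hw Hn. specialize (Hw Hn).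
  unfold T_seq, play_path in *. rewrite <- (prefix_eq w w' (S n)); auto. Qed.

Lemma meas_R T f g eps : measurable (Rset_T T f g eps).
Proof. eapply meas_ext; [apply meas_and; [apply (meas_Cau T f g)|apply (meas_tail T f g (fun m y => y <= eps - / INR (S m)))]|].
  intros w. unfold Rset_T. rewrite R_iff. cbv beta. split; intros [? ?]; split; auto. Qed.
Lemma meas_L T f g eps : measurable (Lset_T T f g eps).
Proof. eapply meas_ext; [apply meas_and; [apply (meas_Cau T f g)|apply (meas_tail T f g (fun m y => eps + / INR (S m) <= y))]|].
  intros w. unfold Lset_T. rewrite L_iff. cbv beta. split; intros [? ?]; split; auto. Qed.

Definition stepF (f g sel : strategy) := (fun (hm : history * R) (x : bool) =>
            (play_step f g (fst hm) x, snd hm * prob (sel (fst hm)) x)).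

Lemma fold_fst f g sel u h m : fst (fold_left (stepF f g sel) u (h, m)) = fold_left (play_step f g) u h.
Proof. revert h m; induction u; intros; simpl; auto. unfold stepF at 2; simpl. apply IHu. Qed.

Lemma cyl_snoc f g sel u x : cyl_mass f g sel (u ++ [x]) =
  cyl_mass f g sel u * prob (sel (play_word f g u)) x.
Proof. unfold cyl_mass. fold (stepF f g sel). rewrite fold_left_app. simpl.
  unfold play_word. rewrite <- (fold_fst f g sel u [] 1). reflexivity. Qed.

Lemma prob_nonneg p x : 0 <= prob p x.
Proof. destruct p as [a Ha]; destruct x; simpl; lra. Qed.

Lemma cyl_nonneg f g sel u : 0 <= cyl_mass f g sel u.
Proof. induction u using rev_ind.
  - unfold cyl_mass; simpl; lra.
  - rewrite cyl_snoc. apply Rmult_le_pos; auto; apply prob_nonneg. Qed.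

Definition gbit (p : Defs.dist) : bool := if Rle_dec (pr1 p) (1/2) then true else false.
Lemma gbit_le p : prob p (gbit p) <= 1/2.
Proof. unfold gbit; destruct (Rle_dec (pr1 p) (1/2)); simpl; lra. Qed.

Fixpoint gw (f g sel : strategy) (k : nat) : list bool :=
  match k with O => [] | S k' => gw f g sel k' ++ [gbit (sel (play_word f g (gw f g sel k')))] end.

Lemma gw_mass f g sel k : cyl_mass f g sel (gw f g sel k) <= (1/2)^k.
Proof. induction k; simpl.
  - unfold cyl_mass; simpl; lra.
  - rewrite cyl_snoc. pose proof (gbit_le (sel (play_word f g (gw f g sel k)))).
    pose proof (cyl_nonneg f g sel (gw f g sel k)).
    pose proof (prob_nonneg (sel (play_word f g (gw f g sel k))) (gbit (sel (play_word f g (gw f g sel k))))).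
    nra. Qed.

Lemma sum_nonneg a n : (forall i, 0 <= a i) -> 0 <= sum_f_R0 a n.
Proof. intros H; induction n; simpl; auto. pose proof (H (S n)); lra. Qed.

Lemma cover_nonneg f g sel A s : cover_sums f g sel A s -> 0 <= s.
Proof. intros [c [_ Hs]]. apply (lim_ge (sum_f_R0 (fun n => cyl_mass f g sel (c n))) _ 0%nat); [exact Hs|]. intros n _.
  apply sum_nonneg; intros; apply cyl_nonneg. Qed.

Lemma geo_sum K n : sum_f_R0 (fun i => (1/2)^K * (1/2)^i) n <= 2 * (1/2)^K.
Proof. assert (E : forall c a, sum_f_R0 (fun i => c * a i) n = c * sum_f_R0 a n).
  { intros c a; induction n; simpl; [ring|rewrite IHn; ring]. }
  rewrite E.
  rewrite tech3 by lra. pose proof (pow_lt 2 K ltac:(lra)).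
  assert (0 < (1/2)^(S n)) by (apply pow_lt; lra).
  assert (0 < (1/2)^K) by (apply pow_lt; lra).
  replace ((1 - (1/2)^(S n)) / (1 - 1/2)) with (2 - 2 * (1/2)^(S n)) by field.
  nra. Qed.

Lemma half_pow_le1 K : (1/2)^K <= 1.
Proof. induction K; simpl; [lra|]. pose proof (pow_le (1/2) K ltac:(lra)). nra. Qed.

Lemma small_cover f g sel A (HA : forall w, ~ A w) K :
  exists s, cover_sums f g sel A s /\ s <= 2 * (1/2)^K.
Proof.
  set (a := fun n => cyl_mass f g sel (gw f g sel (n + K))).
  assert (Hb : forall n, 0 <= a n <= (1/2)^K * (1/2)^n).
  { intros n; split; [apply cyl_nonneg|]. unfold a. rewrite <- pow_add.
    rewrite Nat.add_comm. apply gw_mass. }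
  assert (Hb2 : forall n, 0 <= a n <= (1/2)^n).
  { intros n; destruct (Hb n); split; auto. assert ((1/2)^K <= 1) by apply half_pow_le1.
    assert (0 <= (1/2)^n) by (apply pow_le; lra). nra. }
  destruct (Rseries_CV_comp a (fun n => (1/2)^n) Hb2) as [l Hl].
  { exists (/ (1 - 1/2)). pose proof (GP_infinite (1/2) ltac:(rewrite Rabs_pos_eq; lra)) as G.
    intros e He. destruct (G e He) as [N HN]. exists N; intros n Hn.
    specialize (HN n Hn). erewrite sum_eq; [exact HN|]. intros; simpl; ring. }
  exists l; split.
  - exists (fun n => gw f g sel (n + K)). split; [intros w Hw; exfalso; eapply HA; eauto|]. exact Hl.
  - apply (lim_le _ _ 0%nat _ Hl). intros n _. eapply Rle_trans; [|apply (geo_sum K n)].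
    apply sum_Rle; intros; apply Hb. Qed.

Lemma measure_empty f g sel A : (forall w, ~ A w) -> ~ (measure f g sel A > 0).
Proof. intros HA. unfold measure, inf.
  assert (G0 : is_glb (cover_sums f g sel A) 0).
  { split.
    - intros s Hs; apply (cover_nonneg _ _ _ _ _ Hs).
    - intros r' Hr'. apply Rnot_lt_le; intro C.
      destruct (pow_lt_1_zero (1/2) ltac:(rewrite Rabs_pos_eq; lra) (r'/2) ltac:(lra)) as [K HK].
      specialize (HK K (le_n K)). rewrite Rabs_pos_eq in HK by (apply pow_le; lra).
      destruct (small_cover f g sel A HA K) as [s [Hs Hs2]]. specialize (Hr' s Hs). lra. }
  pose proof (epsilon_spec (inhabits 0) _ (ex_intro _ 0 G0)) as [H1 _].
  intro C. destruct G0 as [_ G2]. specialize (G2 _ H1). unfold is_glb in C. lra. Qed.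

Theorem mainTheorem14 (T : test) (HT : is_test T) (Hr : reasonable T) :
  forall (f g : strategy) (A : seqOmega -> Prop), measurable A ->
    (forall eps, 1/2 < eps < 1 ->
       muF f g (inter A (Rset_T T f g eps)) > 0 ->
       muG f g (inter A (Rset_T T f g eps)) > 0) /\
    (forall eps, 0 < eps < 1/2 ->
       muG f g (inter A (Lset_T T f g eps)) > 0 ->
       muF f g (inter A (Lset_T T f g eps)) > 0).
Proof.
  intros f g A HA. split.
  - intros eps He HF.
    assert (HB : measurable (inter A (Rset_T T f g eps))) by (apply meas_and; [exact HA|apply meas_R]).
    destruct (Hr f g _ HB) as [_ H2]. specialize (H2 eps He HF).
    assert (Hc : 0 < (1 - eps) / eps * muF f g (inter A (Rset_T T f g eps))).
    { apply Rmult_lt_0_compat; [apply Rdiv_lt_0_compat; lra|lra]. }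
    destruct (Rlt_or_le (muG f g (inter A (Rset_T T f g eps))) ((1 - eps) / eps * muF f g (inter A (Rset_T T f g eps)))) as [Hl|Hl]; [|lra].
    exfalso. apply (measure_empty f g f (inter (inter A (Rset_T T f g eps)) (Lset_T T f g eps))); [|exact (H2 Hl)].
    intros w [[_ [l1 [H1 H1']]] [l2 [H3 H3']]]. pose proof (UL_sequence _ _ _ H1 H3). lra.
  - intros eps He HG.
    assert (HB : measurable (inter A (Lset_T T f g eps))) by (apply meas_and; [exact HA|apply meas_L]).
    destruct (Hr f g _ HB) as [H2 _]. specialize (H2 eps He HG).
    assert (Hc : 0 < eps / (1 - eps) * muG f g (inter A (Lset_T T f g eps))).
    { apply Rmult_lt_0_compat; [apply Rdiv_lt_0_compat; lra|lra]. }
    destruct (Rlt_or_le (muF f g (inter A (Lset_T T f g eps))) (eps / (1 - eps) * muG f g (inter A (Lset_T T f g eps)))) as [Hl|Hl]; [|lra].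
    exfalso. apply (measure_empty f g g (inter (inter A (Lset_T T f g eps)) (Rset_T T f g eps))); [|exact (H2 Hl)].
    intros w [[_ [l1 [H1 H1']]] [l2 [H3 H3']]]. pose proof (UL_sequence _ _ _ H1 H3). lra.
Qed.
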